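(* Let $(\mathcal{N},r)$ be a ranked $X$-cactus. Then $\mathcal{S}_i(\mathcal{N})$ is a polestar system on $X$ for every $0\le i\le\sigma(r)$.
   Context: Let $X$ be a finite non-empty set. A rooted DAG $N=(V,A)$ is a finite directed acyclic graph with a vertex $\rho$ of indegree $0$ (the root) from which every vertex is reachable. Leaf: outdegree $0$; tree vertex: indegree $\le1$; reticulation vertex: indegree $\ge2$; if $(u,v)\in A$, $u$ is a parent of $v$. A reticulation cycle consists of two distinct directed paths with the same start and end vertex and no other common vertices. A rooted $X$-cactus $\mathcal{N}=(N,\varphi)$ is a rooted DAG with $\varphi:X\to V$ such that every vertex has indegree $\le2$, no two distinct reticulation cycles share an arc, and $\varphi(X)$ contains all leaves and all tree vertices of outdegree $1$. A time-stamp function is $t:V\to\mathbb{R}_{\ge0}$ with $t(v)=0$ for $v\in\varphi(X)$; $t(u)>t(v)$ for every arc $(u,v)$ with $v$ not a reticulation vertex; $t(v)=t(p_1)=t(p_2)$ for each reticulation vertex $v$ with parents $p_1,p_2$. Size $\sigma(t)=|t(V)|-1$. A ranking is a time-stamp function $r$ with $r(V)=\{0,\dots,\sigma(r)\}$; a ranked $X$-cactus is a rooted $X$-cactus admitting a time-stamp function, together with a ranking. A vertex $u$ is a descendant of $v$ if some directed path from the root to $u$ contains $v$; strict if every such path contains $v$, non-strict otherwise. $S(u)=\{x:\varphi(x)$ strict descendant of $u\}$, $H(u)=\{x:\varphi(x)$ non-strict descendant of $u\}$. For $0\le i\le\sigma(r)$, $V_i=\{u\in V:r(u)\le i$ and $r(p)>i$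 for all parents $p$ of $u\}$ and $\mathcal{S}_i(\mathcal{N})=\{(S(u),H(u)):u\in V_i\}\cup\{(H(u),\emptyset):u\in V_i,H(u)\ne\emptyset\}$. A set pair system on $X$ is a set of ordered pairs $(S,H)$ of subsets of $X$ with $S\ne\emptyset$, $S\cap H=\emptyset$. It is a polestar system (partition-like) if (PL1) $\mathcal{P}(\mathcal{S})=\{S:(S,H)\in\mathcal{S}\}$ is a partition of $X$; (PL2) distinct $(S,H),(S',H')\in\mathcal{S}$ have $S\ne S'$; (PL3) for each $(S,H)\in\mathcal{S}$ with $H\ne\emptyset$ we have $(H,\emptyset)\in\mathcal{S}$ and there is exactly one $(S',H')\in\mathcal{S}$ with $(S',H')\ne(S,H)$ and $H'=H$. *)

(* Defs.v *)
From mathcomp Require Import all_boot.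
From mathcomp Require Import boolp.
Set Implicit Arguments. Unset Strict Implicit. Unset Printing Implicit Defensive.

Section Cactus.
Variables (V X : finType).
Variable a : rel V.

Definition indeg (v : V) : nat := #|[set u | a u v]|.
Definition outdeg (v : V) : nat := #|[set w | a v w]|.
Definition is_leaf (v : V) : bool := outdeg v == 0.
Definition is_tree_vertex (v : V) : bool := indeg v <= 1.
Definition is_reticulation (v : V) : bool := 2 <= indeg v.

(* a directed path is a vertex sequence s :: p with consecutive arcs;
   it starts at s and ends at last s p *)
Definition acyclic : Prop :=
  forall (v : V) (p : seq V), path a v p -> last v p = v -> p = [::].

Definition rooted_DAG (rho : V) : Prop :=
  acyclic /\ indeg rho = 0 /\
  (forall v : V, exists p : seq V, path a rho p /\ last rho p = v).

Definition path_arcs (s : V) (p : seq V) : seq (V * V) := zip (s :: p) p.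

Definition retic_cycle (s : V) (p1 p2 : seq V) : Prop :=
  [/\ path a s p1, path a s p2, last s p1 = last s p2, p1 <> p2 &
      forall v : V, v \in s :: p1 -> v \in s :: p2 ->
        v = s \/ v = last s p1].

Definition cycle_arcs (s : V) (p1 p2 : seq V) : seq (V * V) :=
  path_arcs s p1 ++ path_arcs s p2.

(* distinct reticulation cycles (i.e. with different arc sets) share no arc *)
Definition no_shared_arc : Prop :=
  forall (s : V) (p1 p2 : seq V) (s' : V) (q1 q2 : seq V),
    retic_cycle s p1 p2 -> retic_cycle s' q1 q2 ->
    (exists e, e \in cycle_arcs s p1 p2 /\ e \in cycle_arcs s' q1 q2) ->
    cycle_arcs s p1 p2 =i cycle_arcs s' q1 q2.

Definition is_X_cactus (rho : V) (phi : X -> V) : Prop :=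
  [/\ rooted_DAG rho,
      (forall v : V, indeg v <= 2),
      no_shared_arc &
      (forall v : V, (is_leaf v || (is_tree_vertex v && (outdeg v == 1))) ->
         v \in codom phi)].

Definition sigma (r : V -> nat) : nat := (size (undup [seq r v | v <- enum V])).-1.

(* a ranking: a time-stamp function r (values in N, hence >= 0) with
   r(V) = {0, ..., sigma(r)} *)
Definition is_ranking (phi : X -> V) (r : V -> nat) : Prop :=
  [/\ (forall x : X, r (phi x) = 0),
      (forall u v : V, a u v -> ~~ is_reticulation v -> r v < r u),
      (forall u v : V, a u v -> is_reticulation v -> r u = r v) &
      (forall k : nat, (exists v : V, r v = k) <-> k <= sigma r)].

Definition root_path_to (rho u : V) (p : seq V) : Prop :=
  path a rho p /\ last rho p = u.

Definition descendant (rho u v : V) : Prop :=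
  exists p, root_path_to rho u p /\ v \in rho :: p.

Definition strict_descendant (rho u v : V) : Prop :=
  descendant rho u v /\ forall p, root_path_to rho u p -> v \in rho :: p.

Definition non_strict_descendant (rho u v : V) : Prop :=
  descendant rho u v /\ ~ strict_descendant rho u v.

Definition Sset (rho : V) (phi : X -> V) (u : V) : {set X} :=
  [set x | `[< strict_descendant rho (phi x) u >]].

Definition Hset (rho : V) (phi : X -> V) (u : V) : {set X} :=
  [set x | `[< non_strict_descendant rho (phi x) u >]].

Definition Vi (r : V -> nat) (i : nat) : {set V} :=
  [set u | (r u <= i) && [forall p, a p u ==> (i < r p)]].

Definition Sys_i (rho : V) (phi : X -> V) (r : V -> nat) (i : nat)
  : {set {set X} * {set X}} :=
  [set (Sset rho phi u, Hset rho phi u) | u in Vi r i] :|: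
  [set (Hset rho phi u, set0) | u in [set u in Vi r i | Hset rho phi u != set0]].
End Cactus.

Section Polestar.
Variable X : finType.
Definition set_pair_system (S : {set {set X} * {set X}}) : Prop :=
  forall p, p \in S -> p.1 != set0 /\ p.1 :&: p.2 = set0.

Definition polestar_system (S : {set {set X} * {set X}}) : Prop :=
  [/\ set_pair_system S,
      partition [set p.1 | p in S] [set: X],
      (forall p q, p \in S -> q \in S -> p != q -> p.1 != q.1) &
      (forall p, p \in S -> p.2 != set0 ->
         (p.2, set0) \in S /\
         exists! q, [/\ q \in S, q != p & q.2 = p.2])].
End Polestar.

(* Main.v *)
Require Import Defs.
From Stdlib Require Import Lia.
From mathcomp Require Import all_boot.
From mathcomp Require Import boolp zify.
Set Implicit Arguments. Unset Strict Implicit. Unset Printing Implicit Defensive.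

Lemma mem_splitE (T : eqType) (x : T) l : x \in l -> exists A B, l = A ++ x :: B.
Proof. by case/splitPr => A B; exists A, B. Qed.

Lemma split_first (T : eqType) (P : pred T) l : has P l ->
  exists A x B, [/\ l = A ++ x :: B, P x & ~~ has P A].
Proof.
elim: l => [|y l IH] //=; case: (boolP (P y)) => Py /=.
  by move=> _; exists [::], y, l.
move=> /IH [A [x [B [-> Px nA]]]]; exists (y :: A), x, B; split => //=.
by rewrite negb_or Py.
Qed.

Lemma split_last (T : eqType) (P : pred T) l : has P l ->
  exists A x B, [/\ l = A ++ x :: B, P x & ~~ has P B].
Proof.
elim: l => [|y l IH] //=; case: (boolP (has P l)) => h.
  by move=> _; have [A [x [B [-> Px nB]]]] := IH h; exists (y :: A), x, B.
rewrite orbF => Py; by exists [::], y, l.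
Qed.

Lemma cat_split (T : eqType) (A B C D : seq T) s :
  A ++ s :: B = C ++ D -> s \notin D -> exists E, B = E ++ D /\ C = A ++ s :: E.
Proof.
elim: A C => [|x A IH] [|c C] /=.
- by move=> <-; rewrite mem_head.
- by case=> -> ->; exists C.
- by move=> <-; rewrite in_cons mem_cat mem_head !orbT.
- case=> -> e nD; have [E [-> ->]] := IH C e nD; by exists E.
Qed.

Lemma succ_uniq (T : eqType) (l E F E' F' : seq T) y z z' :
  uniq l -> l = E ++ y :: z :: F -> l = E' ++ y :: z' :: F' -> z = z'.
Proof.
move=> U e1 e2.
have hE : y \notin E.
  by move: U; rewrite e1 cat_uniq => /and3P[_ /hasPn/(_ y (mem_head _ _)) h _].
have hE' : y \notin E'.
  by move: U; rewrite e2 cat_uniq => /and3P[_ /hasPn/(_ y (mem_head _ _)) h _].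
have i1 : index y l = size E by rewrite e1 index_cat (negbTE hE) /= eqxx addn0.
have i2 : index y l = size E' by rewrite e2 index_cat (negbTE hE') /= eqxx addn0.
have hs : size E = size E' by rewrite -i1 -i2.
move: e2; rewrite e1 => e.
have := congr1 (drop (size E)) e; rewrite drop_size_cat // hs drop_size_cat //.
by case.
Qed.

Lemma zip_mid (T : eqType) (x : T) E y F :
  (last x E, y) \in zip (x :: E ++ y :: F) (E ++ y :: F).
Proof.
elim: E x => [|e E IH] x /=; first by rewrite in_cons eqxx.
by rewrite in_cons IH orbT.
Qed.

Lemma zip_split (T : eqType) (s : T) p q v : (q, v) \in zip (s :: p) p ->
  exists E F, s :: p = E ++ q :: v :: F.
Proof.
elim: p s => [|z p IH] s //=; rewrite in_cons => /predU1P[[-> ->]|h].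
  by exists [::], p.
have [E [F e]] := IH z h; exists (s :: E), F; by rewrite /= -e.
Qed.

Lemma pred_exists (T : eqType) (s : T) p v : v \in s :: p -> v != s ->
  exists q, (q, v) \in zip (s :: p) p.
Proof.
elim: p s => [|z p IH] s; first by rewrite mem_seq1 => /eqP->; rewrite eqxx.
rewrite in_cons => /predU1P[->|vin]; first by rewrite eqxx.
move=> vs; case: (eqVneq v z) => [->|vz].
  by exists s; rewrite /= in_cons eqxx.
have [q hq] := IH z vin vz; exists q; by rewrite /= in_cons hq orbT.
Qed.

Lemma last_split (T : eqType) (x : T) p A s E : x :: p = A ++ s :: E -> last x p = last s E.
Proof.
case: A => [|y A] /= [e1 e2]; first by subst.
by rewrite e2 last_cat.
Qed.

Section Paths.
Variables (V : finType) (a : rel V).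
Hypothesis Hacyc : acyclic a.

Lemma zip_arc s p q v : path a s p -> (q, v) \in zip (s :: p) p ->
  [/\ a q v, q \in s :: p & v \in p].
Proof.
elim: p s => [|z p IH] s //= /andP[asz pz]; rewrite in_cons => /predU1P[[-> ->]|h].
  by rewrite !mem_head.
have [aqv qin vin] := IH z pz h.
by split => //; rewrite in_cons ?qin ?vin orbT.
Qed.

Lemma path_suffix s p E x G : path a s p -> s :: p = E ++ x :: G ->
  path a x G /\ last x G = last s p.
Proof.
move=> pp; case: E => [|e E] /=; first by case=> e1 e2; subst.
case=> es pe; move: pp; rewrite pe cat_path last_cat => /andP[_] /= /andP[_ ->]; by [].
Qed.

Lemma mem_path_connect x p y : path a x p -> y \in x :: p ->
  connect a x y /\ connect a y (last x p).
Proof.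
move=> pp /mem_splitE [E [G e]].
have [pG lG] := path_suffix pp e.
split; last by apply/connectP; exists G.
case: E e => [|e E] /=; first by case=> ->.
case=> ex pe; subst e; move: pp; rewrite pe cat_path => /andP[pE] /= /andP[ay _].
apply/connectP; exists (rcons E y); first by rewrite rcons_path pE ay.
by rewrite last_rcons.
Qed.

Lemma path_uniq s p : path a s p -> uniq (s :: p).
Proof.
elim: p s => [|z p IH] s //= /andP[asz pz].
have := IH z pz => /= ->; rewrite andbT.
apply/negP => /mem_splitE [A [B e]].
have : path a s (z :: p) by rewrite /= asz.
rewrite e cat_path => /andP[pA] /= /andP[aAs _].
have := Hacyc (v := s) (p := rcons A s); rewrite rcons_path pA aAs last_rcons.
move=> /(_ isT erefl) /eqP; by rewrite -size_eq0 size_rcons.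
Qed.

Lemma nolastout s p y c : path a s p -> last s p = y -> (y, c) \in zip (s :: p) p -> False.
Proof.
move=> pp ly /zip_split [E [F e]].
have [pF lF] := path_suffix pp e.
have := Hacyc pF; rewrite lF ly => /(_ erefl); by [].
Qed.

Lemma same_side s p y c1 c2 : path a s p -> (y, c1) \in zip (s :: p) p ->
  (y, c2) \in zip (s :: p) p -> c1 = c2.
Proof.
move=> pp /zip_split [E [F e]] /zip_split [E' [F' e']].
exact: (succ_uniq (path_uniq pp) e e').
Qed.

Lemma out2 s p1 p2 y c1 c2 : retic_cycle a s p1 p2 ->
  (y, c1) \in cycle_arcs s p1 p2 -> (y, c2) \in cycle_arcs s p1 p2 -> c1 != c2 -> y = s.
Proof.
case=> pp1 pp2 el _ com; rewrite /cycle_arcs /path_arcs !mem_cat.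
have side : forall p, path a s p -> forall c, (y, c) \in zip (s :: p) p ->
    y \in s :: p /\ y != last s p.
  move=> p pp c h; have [_ yin _] := zip_arc pp h; split => //.
  by apply/negP => /eqP ly; apply: (nolastout pp (esym ly) h).
case/orP=> h1 /orP[] h2 neq.
- by rewrite (same_side pp1 h1 h2) eqxx in neq.
- have [y1 ny1] := side _ pp1 _ h1; have [y2 _] := side _ pp2 _ h2.
  by case: (com y y1 y2) => // ly; rewrite ly eqxx in ny1.
- have [y1 ny1] := side _ pp1 _ h2; have [y2 _] := side _ pp2 _ h1.
  by case: (com y y1 y2) => // ly; rewrite ly eqxx in ny1.
- by rewrite (same_side pp2 h1 h2) eqxx in neq.
Qed.

Lemma top_cycle x l1 l2 q1 q2 m : path a x l1 -> last x l1 = q1 ->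
  path a x l2 -> last x l2 = q2 -> a q1 m -> a q2 m -> q1 != q2 ->
  exists A s B C D, [/\ x :: l1 = A ++ s :: B, x :: l2 = C ++ s :: D,
    retic_cycle a s (rcons B m) (rcons D m),
    (q1, m) \in path_arcs s (rcons B m) & (q2, m) \in path_arcs s (rcons D m)].
Proof.
move=> p1 e1 p2 e2 a1 a2 nq.
have : has (mem (x :: l2)) (x :: l1) by rewrite /= mem_head.
case/split_last => A [s [B [eA sin nB]]].
have [C [D eC]] := mem_splitE sin.
have [pB lB] := path_suffix p1 eA.
have [pD lD] := path_suffix p2 eC.
exists A, s, B, C, D; split => //.
- split.
  + by rewrite rcons_path pB lB e1 a1.
  + by rewrite rcons_path pD lD e2 a2.
  + by rewrite !last_rcons.
  + move=> /rcons_inj; case=> eBD; move: lB; rewrite eBD lD e1 e2 => E.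
    by move: nq; rewrite E eqxx.
  + move=> v; rewrite !in_cons !mem_rcons !in_cons last_rcons.
    case/predU1P => [->|]; first by left.
    case/predU1P => [->|vB]; first by right.
    case/predU1P => [->|]; first by left.
    case/predU1P => [->|vD]; first by right.
    have vin : v \in x :: l2 by rewrite eC mem_cat in_cons vD !orbT.
    by exfalso; move/hasPn: nB => /(_ v vB) /negP; apply; exact: vin.
- by rewrite /path_arcs -cats1 -e1 -lB zip_mid.
- by rewrite /path_arcs -cats1 -e2 -lD zip_mid.
Qed.

End Paths.
Section Main.
Variables (V X : finType) (a : rel V) (rho : V) (phi : X -> V) (r : V -> nat) (i : nat).
Hypothesis Hacyc : acyclic a.
Hypothesis Hind0 : indeg a rho = 0.
Hypothesis Hreach : forall v, exists p, path a rho p /\ last rho p = v.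
Hypothesis Hcact : no_shared_arc a.
Hypothesis Hphi : forall v, (is_leaf a v || (is_tree_vertex a v && (outdeg a v == 1))) ->
  v \in codom phi.
Hypothesis Hlt : forall u v, a u v -> ~~ is_reticulation a v -> r v < r u.
Hypothesis Heq : forall u v, a u v -> is_reticulation a v -> r u = r v.

Local Notation Vs := (Vi a r i).

Lemma arc_rank u v : a u v -> r v <= r u.
Proof. move=> h; case: (boolP (is_reticulation a v)) => rt; [by rewrite (Heq h rt)| exact: ltnW (Hlt h rt)]. Qed.

Lemma path_rank x p : path a x p -> forall y, y \in x :: p -> r y <= r x.
Proof.
elim: p x => [|z p IH] x /=; first by move=> _ y; rewrite mem_seq1 => /eqP->.
move=> /andP[axz pz] y; rewrite in_cons => /predU1P[->//|yin].
exact: leq_trans (IH z pz y yin) (arc_rank axz).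
Qed.

Lemma rank_last x p y : path a x p -> y \in x :: p -> r (last x p) <= r y.
Proof.
move=> pp /mem_splitE [E [G e]]; have [pG <-] := path_suffix pp e.
exact: path_rank pG _ (mem_last _ _).
Qed.

Lemma connect_rank x y : connect a x y -> r y <= r x.
Proof. by case/connectP => p pp ->; apply: path_rank pp _ (mem_last _ _). Qed.

Lemma connect_rho v : connect a rho v.
Proof. by have [p [pp lp]] := Hreach v; apply/connectP; exists p. Qed.

Lemma crossM s p q v q' v' : i < r q -> r v <= i -> i < r q' -> r v' <= i ->
  path a s p -> (q, v) \in zip (s :: p) p -> (q', v') \in zip (s :: p) p -> v = v'.
Proof.
move=> h1 h2 h3 h4; elim: p s => [|z p IH] s //= /andP[asz pz].
rewrite !in_cons => /predU1P[[e1 e2]|m1] /predU1P[[e3 e4]|m2].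
- by subst.
- subst; have [_ qin _] := zip_arc pz m2.
  have := path_rank pz qin; move: h3 h2; clear; lia.
- subst; have [_ qin _] := zip_arc pz m1.
  have := path_rank pz qin; move: h1 h4; clear; lia.
- exact: IH pz m1 m2.
Qed.

Lemma three s p1 p2 q1 v1 q2 v2 q3 v3 : retic_cycle a s p1 p2 ->
  i < r q1 -> r v1 <= i -> i < r q2 -> r v2 <= i -> i < r q3 -> r v3 <= i ->
  (q1, v1) \in cycle_arcs s p1 p2 -> (q2, v2) \in cycle_arcs s p1 p2 ->
  (q3, v3) \in cycle_arcs s p1 p2 -> [\/ v1 = v2, v1 = v3 | v2 = v3].
Proof.
case=> pp1 pp2 _ _ _ h1 h2 h3 h4 h5 h6; rewrite /cycle_arcs /path_arcs !mem_cat.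
case/orP=> m1 /orP[] m2 /orP[] m3;
  try (by constructor 1; apply: crossM pp1 m1 m2);
  try (by constructor 1; apply: crossM pp2 m1 m2);
  try (by constructor 2; apply: crossM pp1 m1 m3);
  try (by constructor 2; apply: crossM pp2 m1 m3);
  try (by constructor 3; apply: crossM pp1 m2 m3);
  try (by constructor 3; apply: crossM pp2 m2 m3).
Qed.

Lemma par_uniq_nonret v p p' : ~~ is_reticulation a v -> a p v -> a p' v -> p = p'.
Proof.
rewrite /is_reticulation /indeg -leqNgt => h ap ap'.
by move/card_le1_eqP: h; apply; rewrite inE.
Qed.

Lemma Vi_par u p : u \in Vs -> a p u -> i < r p.
Proof. by rewrite inE => /andP[_ /forallP /(_ p) /implyP]. Qed.

Lemma Vi_le u : u \in Vs -> r u <= i.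
Proof. by rewrite inE => /andP[]. Qed.

Lemma Vi_notret u : u \in Vs -> ~~ is_reticulation a u.
Proof.
move=> uV; apply/negP => rt.
have : 0 < #|[set q | a q u]| by move: rt; rewrite /is_reticulation /indeg; case: #|_|.
rewrite card_gt0 => /set0Pn [q]; rewrite inE => aq.
have := Vi_par uV aq; rewrite (Heq aq rt); have := Vi_le uV; clear; lia.
Qed.

Lemma noVV v w : r v <= i -> w \in Vs -> connect a v w -> v = w.
Proof.
move=> rv wV /connectP [p pp wl]; case: (eqVneq w v) => [//|wv].
have wi : w \in v :: p by rewrite wl mem_last.
have [q hq] := pred_exists wi wv.
have [aq qin _] := zip_arc pp hq.
have := Vi_par wV aq; have := path_rank pp qin; move: rv; clear; lia.
Qed.

Lemma par_exists v : v != rho -> exists q, a q v.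
Proof.
move=> vr; have [p [pp lp]] := Hreach v.
have vi : v \in rho :: p by rewrite -lp mem_last.
have [q hq] := pred_exists vi vr.
by have [aq _ _] := zip_arc pp hq; exists q.
Qed.

Lemma rho_Vi : r rho <= i -> rho \in Vs.
Proof.
move=> h; rewrite inE h /=; apply/forallP => q; apply/implyP => aq.
move: Hind0; rewrite /indeg => /eqP; rewrite cards_eq0 => /eqP E.
have : q \in [set q0 | a q0 rho] by rewrite inE.
by rewrite E inE.
Qed.

Lemma cross x p : path a x p -> r (last x p) <= i -> (i < r x \/ x \in Vs) ->
  exists2 w, w \in Vs & w \in x :: p.
Proof.
elim: p x => [|z p IH] x /=.
  move=> _ h [h'|xV]; last by exists x; rewrite ?mem_head.
  by move: h h'; clear; lia.
move=> /andP[axz pz] hl [h|xV]; last by exists x; rewrite ?mem_head.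
have hz : i < r z \/ z \in Vs.
  case: (leqP (r z) i) => hz; [right|by left].
  have nr : ~~ is_reticulation a z.
    apply/negP => rt; move: (Heq axz rt) h hz; clear; lia.
  rewrite inE hz /=; apply/forallP => q; apply/implyP => aq.
  by rewrite (par_uniq_nonret nr aq axz).
have [w wV win] := IH z pz hl hz; exists w => //; by rewrite in_cons win orbT.
Qed.

Lemma root_meets p : path a rho p -> r (last rho p) <= i ->
  exists2 w, w \in Vs & w \in rho :: p.
Proof.
move=> pp h; apply: cross pp h _; case: (leqP (r rho) i) => hr; [right; exact: rho_Vi|by left].
Qed.

Lemma cycle_through u w pu pw A C q1 q2 m : a pu u -> a pw w -> i < r pu -> i < r pw ->
  r u <= i -> r w <= i -> path a u A -> last u A = q1 -> path a w C -> last w C = q2 ->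
  a q1 m -> a q2 m -> (forall z, z \in u :: A -> z \notin w :: C) ->
  exists s p1 p2, [/\ retic_cycle a s p1 p2, (pu, u) \in cycle_arcs s p1 p2,
    (pw, w) \in cycle_arcs s p1 p2, (q1, m) \in cycle_arcs s p1 p2 & i < r s].
Proof.
move=> apu apw rpu rpw ru rw pA lA pC lC a1 a2 dis.
have [r1 [pr1 lr1]] := Hreach pu; have [r2 [pr2 lr2]] := Hreach pw.
have pl1 : path a rho (r1 ++ u :: A) by rewrite cat_path pr1 lr1 /= apu pA.
have pl2 : path a rho (r2 ++ w :: C) by rewrite cat_path pr2 lr2 /= apw pC.
have ll1 : last rho (r1 ++ u :: A) = q1 by rewrite last_cat.
have ll2 : last rho (r2 ++ w :: C) = q2 by rewrite last_cat.
have nq : q1 != q2.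
  apply/negP => /eqP e; have h1 : q1 \in u :: A by rewrite -lA mem_last.
  have h2 : q1 \in w :: C by rewrite e -lC mem_last.
  by move: (dis q1 h1); rewrite h2.
have [A0 [s [B [C0 [D [e1 e2 cyc ar1 ar2]]]]]] := top_cycle pl1 ll1 pl2 ll2 a1 a2 nq.
have s1 : s \in rho :: r1 ++ u :: A by rewrite e1 mem_cat mem_head orbT.
have s2 : s \in rho :: r2 ++ w :: C by rewrite e2 mem_cat mem_head orbT.
move: s1 s2; rewrite -!cat_cons !mem_cat => s1 s2.
have nsA : s \notin u :: A.
  apply/negP => sA; have rs := leq_trans (path_rank pA sA) ru.
  case/orP: s2 => s2.
    by have := rank_last pr2 s2; rewrite lr2; move: rs rpw; clear; lia.
  by move: (dis s sA); rewrite s2.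
have nsC : s \notin w :: C.
  apply/negP => sC; have rs := leq_trans (path_rank pC sC) rw.
  case/orP: s1 => s1.
    by have := rank_last pr1 s1; rewrite lr1; move: rs rpu; clear; lia.
  by move: (dis s s1); rewrite sC.
have s1' : s \in rho :: r1 by move: s1; rewrite (negbTE nsA) orbF.
have rs : i < r s by have := rank_last pr1 s1'; rewrite lr1; move: rpu; clear; lia.
exists s, (rcons B m), (rcons D m); split => //; rewrite /cycle_arcs mem_cat ?ar1 //.
- apply/orP; left.
  move: e1; rewrite -cat_cons => /esym e1; have [E [eB eE]] := cat_split e1 nsA.
  have lE : last s E = pu by rewrite -lr1 (last_split eE).
  by rewrite /path_arcs eB rcons_cat /= -lE zip_mid.
- apply/orP; right.
  move: e2; rewrite -cat_cons => /esym e2; have [E [eD eE]] := cat_split e2 nsC.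
  have lE : last s E = pw by rewrite -lr2 (last_split eE).
  by rewrite /path_arcs eD rcons_cat /= -lE zip_mid.
Qed.

Lemma merge u w P P' y : path a u P -> last u P = y -> path a w P' -> last w P' = y ->
  u \notin w :: P' -> w \notin u :: P ->
  exists A C q1 q2 m, [/\ path a u A, last u A = q1, path a w C & last w C = q2] /\
    [/\ a q1 m, a q2 m & forall z, z \in u :: A -> z \notin w :: C].
Proof.
move=> pP lP pP' lP' nu nw.
have : has (mem (w :: P')) (u :: P).
  apply/hasP; exists y; first by rewrite -lP mem_last.
  have h : y \in w :: P' by rewrite -lP' mem_last.
  exact: h.
case/split_first => A0 [m [B [e hm nA]]].
have hm' : m \in w :: P' by exact: hm.
case: A0 e nA => [|u' A] e nA; move: e => /=.
  by case=> eu _; move: nu; rewrite eu hm'.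
case=> eu eP; subst u'.
move: pP; rewrite eP cat_path => /andP[pA] /= /andP[am _].
have [C0 [D eC]] := mem_splitE hm'.
case: C0 eC => [|w' C] /=.
  case=> ew _; move: nw; rewrite ew eP in_cons mem_cat in_cons eqxx !orbT; by [].
case=> ew eP'; subst w'.
move: pP'; rewrite eP' cat_path => /andP[pC] /= /andP[cm _].
exists A, C, (last u A), (last w C), m; split => //; split => // z zA.
apply/negP => zC.
have zP : z \in w :: P'.
  by move: zC; rewrite eP' !in_cons mem_cat => /orP[->|->]; rewrite ?orbT.
move/hasPn: nA => /(_ z zA) /negP; apply; exact: zP.
Qed.

Lemma cyc_pair u w y : u \in Vs -> w \in Vs -> u != w -> connect a u y -> connect a w y ->
  exists s p1 p2 pu pw, [/\ retic_cycle a s p1 p2, a pu u, a pw w,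
    (pu, u) \in cycle_arcs s p1 p2 & (pw, w) \in cycle_arcs s p1 p2].
Proof.
move=> uV wV uw /connectP [P pP lP] /connectP [P' pP' lP'].
have nu : u \notin w :: P'.
  apply/negP => h; have [c _] := mem_path_connect pP' h.
  by rewrite (noVV (Vi_le wV) uV c) eqxx in uw.
have nw : w \notin u :: P.
  apply/negP => h; have [c _] := mem_path_connect pP h.
  by rewrite (noVV (Vi_le uV) wV c) eqxx in uw.
have [A [C [q1 [q2 [m [[pA lA pC lC] [a1 a2 dis]]]]]]] :=
  merge pP (esym lP) pP' (esym lP') nu nw.
have ur : u != rho.
  apply/eqP => e; have c : connect a u w by rewrite e connect_rho.
  by rewrite (noVV (Vi_le uV) wV c) eqxx in uw.
have wr : w != rho.
  apply/eqP => e; have c : connect a w u by rewrite e connect_rho.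
  by rewrite (noVV (Vi_le wV) uV c) eqxx in uw.
have [pu apu] := par_exists ur; have [pw apw] := par_exists wr.
have [s [p1 [p2 [cyc h1 h2 _ _]]]] := cycle_through apu apw (Vi_par uV apu) (Vi_par wV apw)
  (Vi_le uV) (Vi_le wV) pA lA pC lC a1 a2 dis.
by exists s, p1, p2, pu, pw.
Qed.

Lemma partner u w1 w2 y1 y2 : u \in Vs -> w1 \in Vs -> w2 \in Vs -> u != w1 -> u != w2 ->
  connect a u y1 -> connect a w1 y1 -> connect a u y2 -> connect a w2 y2 -> w1 = w2.
Proof.
move=> uV w1V w2V uw1 uw2 c1 c1' c2 c2'.
have [s [p1 [p2 [pu [pw1 [cyc apu apw1 h1 h2]]]]]] := cyc_pair uV w1V uw1 c1 c1'.
have [s' [q1 [q2 [pu' [pw2 [cyc' apu' apw2 h1' h2']]]]]] := cyc_pair uV w2V uw2 c2 c2'.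
have epu : pu = pu' := par_uniq_nonret (Vi_notret uV) apu apu'.
subst pu'.
have eqa := Hcact cyc cyc' (ex_intro _ (pu, u) (conj h1 h1')).
have h3 : (pw2, w2) \in cycle_arcs s p1 p2 by rewrite eqa.
case: (three cyc (Vi_par uV apu) (Vi_le uV) (Vi_par w1V apw1) (Vi_le w1V)
  (Vi_par w2V apw2) (Vi_le w2V) h1 h2 h3) => // e.
- by rewrite e eqxx in uw1.
- by rewrite e eqxx in uw2.
Qed.

Definition inD u y := connect a u y && [forall w, ((w \in Vs) && connect a w y) ==> (w == u)].

Lemma child_bad u y c : u \in Vs -> inD u y -> a y c -> ~~ inD u c ->
  exists s p1 p2 pu, [/\ retic_cycle a s p1 p2, a pu u, (pu, u) \in cycle_arcs s p1 p2,
    (y, c) \in cycle_arcs s p1 p2 & i < r s].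
Proof.
move=> uV /andP[cuy /forallP fy] ayc.
have cuc : connect a u c := connect_trans cuy (connect1 ayc).
rewrite /inD cuc /= => /forallPn [w]; rewrite negb_imply => /andP[/andP[wV cwc] wu].
have ry : r y <= i := leq_trans (connect_rank cuy) (Vi_le uV).
case/connectP: cwc => C' pC' lC'.
case/lastP: C' pC' lC' => [|C c'] /=.
  move=> _ e; rewrite e in ayc; have := Vi_par wV ayc; move: ry; clear; lia.
rewrite rcons_path last_rcons => /andP[pC aC] e; subst c'.
case/connectP: cuy => A pA lA.
have dis : forall z, z \in u :: A -> z \notin w :: C.
  move=> z zA; apply/negP => zC.
  have [cwz _] := mem_path_connect pC zC; have [_ czy] := mem_path_connect pA zA.
  rewrite -lA in czy.
  have := fy w; rewrite wV (connect_trans cwz czy) /= => /eqP e.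
  by rewrite e eqxx in wu.
have ur : u != rho.
  apply/eqP => e; have cc : connect a u w by rewrite e connect_rho.
  by rewrite (noVV (Vi_le uV) wV cc) eqxx in wu.
have wr : w != rho.
  apply/eqP => e; have cc : connect a w u by rewrite e connect_rho.
  by rewrite (noVV (Vi_le wV) uV cc) eqxx in wu.
have [pu apu] := par_exists ur; have [pw apw] := par_exists wr.
have [s [p1 [p2 [cyc h1 _ h3 rs]]]] := cycle_through apu apw (Vi_par uV apu) (Vi_par wV apw)
  (Vi_le uV) (Vi_le wV) pA (esym lA) pC erefl ayc aC dis.
by exists s, p1, p2, pu.
Qed.

Lemma Snonempty u : u \in Vs -> exists x, connect a u (phi x) /\
  forall w, w \in Vs -> connect a w (phi x) -> w = u.
Proof.
move=> uV.
have uD : inD u u.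
  rewrite /inD connect0 /=; apply/forallP => w; apply/implyP => /andP[wV cwu].
  by apply/eqP; exact: (noVV (Vi_le wV) uV cwu).
pose F y := #|[set z | connect a y z]|.
case: (arg_minnP F uD) => y yD ymin.
have nochild : forall c, a y c -> ~~ inD u c.
  move=> c ayc; apply/negP => cD; have := ymin c cD.
  suff : F c < F y by move=> h1 h2; move: h1 h2; clear; lia.
  apply: proper_card; apply/properP; split.
    by apply/subsetP => z; rewrite !inE => czz; exact: connect_trans (connect1 ayc) czz.
  exists y; rewrite !inE ?connect0 //.
  apply/negP => /connectP [q pq lq].
  have h : path a y (c :: q) by rewrite /= ayc pq.
  by have := Hacyc h; rewrite /= -lq => /(_ erefl).
have yD' := yD; case/andP: yD' => cuy /forallP fy.
have ry : r y <= i := leq_trans (connect_rank cuy) (Vi_le uV).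
suff : y \in codom phi.
  case/codomP => x ex; exists x; rewrite -ex; split => // w wV cw; apply/eqP.
  by have := fy w; rewrite wV cw.
apply: Hphi.
case: (posnP (outdeg a y)) => [o0|opos]; first by rewrite /is_leaf o0.
have [c ayc] : exists c, a y c.
  by move: opos; rewrite /outdeg card_gt0 => /set0Pn [c]; rewrite inE; exists c.
case: (leqP (outdeg a y) 1) => o1; last first.
  move: o1; rewrite /outdeg => /card_gt1P [c1 [c2 [c1in c2in neq]]].
  rewrite inE in c1in; rewrite inE in c2in.
  have [s [p1 [p2 [pu [cyc apu h1 h2 rs]]]]] := child_bad uV yD c1in (nochild _ c1in).
  have [s' [q1 [q2 [pu' [cyc' apu' h1' h2' _]]]]] := child_bad uV yD c2in (nochild _ c2in).
  have epu : pu = pu' := par_uniq_nonret (Vi_notret uV) apu apu'.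
  subst pu'.
  have eqa := Hcact cyc cyc' (ex_intro _ (pu, u) (conj h1 h1')).
  have h3 : (y, c2) \in cycle_arcs s p1 p2 by rewrite eqa.
  have ys := out2 Hacyc cyc h2 h3 neq.
  by move: rs ry; rewrite ys; clear; lia.
have o1' : outdeg a y = 1 by move: opos o1; clear; lia.
apply/orP; right; rewrite o1' eqxx andbT /is_tree_vertex leqNgt; apply/negP => rt.
have [s [p1 [p2 [pu [cyc apu h1 h2 rs]]]]] := child_bad uV yD ayc (nochild _ ayc).
have ys : y != s by apply/eqP => e; move: rs ry; rewrite e; clear; lia.
have cyc0 := cyc; case: cyc0 => pp1 pp2 _ _ _.
have [q [hq aq]] : exists q, (q, y) \in cycle_arcs s p1 p2 /\ a q y.
  move: h2; rewrite /cycle_arcs /path_arcs mem_cat => /orP[] h.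
  - have [_ yin _] := zip_arc pp1 h; have [q hq] := pred_exists yin ys.
    have [aq _ _] := zip_arc pp1 hq; exists q; by rewrite mem_cat hq.
  - have [_ yin _] := zip_arc pp2 h; have [q hq] := pred_exists yin ys.
    have [aq _ _] := zip_arc pp2 hq; exists q; by rewrite mem_cat hq orbT.
move: rt; rewrite /indeg => /card_gt1P [x1 [x2 [x1in x2in nx]]].
rewrite inE in x1in; rewrite inE in x2in.
have [q2 [aq2 nq]] : exists q2, a q2 y /\ q != q2.
  case: (eqVneq q x1) => [e|ne]; last by exists x1.
  by exists x2; split => //; rewrite e.
have [l1 [pl1 ll1]] := Hreach q; have [l2 [pl2 ll2]] := Hreach q2.
have [A0 [s' [B [C0 [D [_ _ cyc' ar1 _]]]]]] := top_cycle pl1 ll1 pl2 ll2 aq aq2 nq.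
have hq' : (q, y) \in cycle_arcs s' (rcons B y) (rcons D y) by rewrite /cycle_arcs mem_cat ar1.
have eqa := Hcact cyc' cyc (ex_intro _ (q, y) (conj hq' hq)).
have h : (y, c) \in cycle_arcs s' (rcons B y) (rcons D y) by rewrite eqa.
case: cyc' => pB pD _ _ _.
move: h; rewrite /cycle_arcs /path_arcs mem_cat => /orP[] h.
- exact: (nolastout Hacyc pB (last_rcons _ _ _) h).
- exact: (nolastout Hacyc pD (last_rcons _ _ _) h).
Qed.

Hypothesis Hr0 : forall x, r (phi x) = 0.

Lemma rphi x : r (phi x) <= i. Proof. by rewrite Hr0. Qed.

Lemma desc_iff t v : descendant a rho t v <-> connect a v t.
Proof.
split.
  by case=> p [[pp lp] vin]; have [_ c] := mem_path_connect pp vin; rewrite -lp.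
case/connectP => q pq lq; have [p0 [pp0 lp0]] := Hreach v.
exists (p0 ++ q); split; first split.
- by rewrite cat_path pp0 lp0 pq.
- by rewrite last_cat lp0 lq.
- by rewrite -cat_cons mem_cat -lp0 mem_last.
Qed.

Lemma S_iff t v : v \in Vs -> r t <= i -> strict_descendant a rho t v <->
  connect a v t /\ forall w, w \in Vs -> connect a w t -> w = v.
Proof.
move=> vV rt; split.
  case=> /desc_iff cvt all; split => // w wV /connectP [q pq lq].
  have [p0 [pp0 lp0]] := Hreach w.
  have h1 : path a rho (p0 ++ q) by rewrite cat_path pp0 lp0 pq.
  have h2 : last rho (p0 ++ q) = t by rewrite last_cat lp0 lq.
  have := all (p0 ++ q) (conj h1 h2).
  rewrite -cat_cons mem_cat => /orP[] vin.
  - have [_ c] := mem_path_connect pp0 vin; rewrite lp0 in c.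
    by rewrite (noVV (Vi_le vV) wV c).
  - have vin' : v \in w :: q by rewrite in_cons vin orbT.
    have [c _] := mem_path_connect pq vin'; exact: noVV (Vi_le wV) vV c.
case=> cvt un; split; first by apply/desc_iff.
move=> p [pp lp]; have rl : r (last rho p) <= i by rewrite lp.
have [w wV win] := root_meets pp rl.
have [_ c] := mem_path_connect pp win; rewrite lp in c.
by rewrite -(un w wV c).
Qed.

Lemma H_iff t v : v \in Vs -> r t <= i -> non_strict_descendant a rho t v <->
  connect a v t /\ exists w, [/\ w \in Vs, connect a w t & w != v].
Proof.
move=> vV rt; split.
  case=> /desc_iff cvt nS; split => //.
  case: (boolP [exists w, (w \in Vs) && connect a w t && (w != v)]).
    by case/existsP => w /andP[/andP[wV c] ne]; exists w.
  move=> /existsPn h; exfalso; apply: nS; apply/(S_iff vV rt); split => // w wV c.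
  by apply/eqP; have := h w; rewrite wV c /= => /negbNE.
case=> cvt [w [wV cw ne]]; split; first by apply/desc_iff.
move/(S_iff vV rt) => [_ un]; by rewrite (un w wV cw) eqxx in ne.
Qed.

Local Notation Ss := (Sset a rho phi).
Local Notation Hs := (Hset a rho phi).
Local Notation Sys := (Sys_i a rho phi r i).

Lemma inS x u : u \in Vs -> x \in Ss u <->
  connect a u (phi x) /\ forall w, w \in Vs -> connect a w (phi x) -> w = u.
Proof.
move=> uV; rewrite inE; split => [/asboolP/(S_iff uV (rphi x))//|h].
by apply/asboolP/(S_iff uV (rphi x)).
Qed.

Lemma inH x u : u \in Vs -> x \in Hs u <->
  connect a u (phi x) /\ exists w, [/\ w \in Vs, connect a w (phi x) & w != u].
Proof.
move=> uV; rewrite inE; split => [/asboolP/(H_iff uV (rphi x))//|h].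
by apply/asboolP/(H_iff uV (rphi x)).
Qed.

Lemma F_SH u w x : u \in Vs -> w \in Vs -> x \in Ss u -> x \in Hs w -> False.
Proof.
move=> uV wV /(inS _ uV) [_ un] /(inH _ wV) [cw [w' [w'V cw' ne]]].
by move: ne; rewrite (un w' w'V cw') (un w wV cw) eqxx.
Qed.

Lemma F_SS u w x : u \in Vs -> w \in Vs -> x \in Ss u -> x \in Ss w -> u = w.
Proof.
move=> uV wV /(inS _ uV) [_ un] /(inS _ wV) [cw _]; by rewrite (un w wV cw).
Qed.

Lemma F_Sne u : u \in Vs -> Ss u != set0.
Proof.
move=> uV; have [x h] := Snonempty uV; apply/set0Pn; exists x; exact/(inS _ uV).
Qed.

Lemma F_HH_sub u w x : u \in Vs -> w \in Vs -> x \in Hs u -> x \in Hs w -> Hs u \subset Hs w.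
Proof.
move=> uV wV xu xw; case: (eqVneq u w) => [->//|uw].
move/(inH _ uV): xu => [cux _]; move/(inH _ wV): xw => [cwx _].
apply/subsetP => z /(inH _ uV) [cuz [w'' [w''V cz ne]]].
have uw'' : u != w'' by rewrite eq_sym.
have e : w = w'' := partner uV wV w''V uw uw'' cux cwx cuz cz.
subst w''; apply/(inH _ wV); split => //; exists u; split => //.
Qed.

Lemma F_HH u w x : u \in Vs -> w \in Vs -> x \in Hs u -> x \in Hs w -> Hs u = Hs w.
Proof.
move=> uV wV xu xw; apply/eqP; rewrite eqEsubset.
by rewrite (F_HH_sub uV wV xu xw) (F_HH_sub wV uV xw xu).
Qed.

Lemma F_Hpartner u x : u \in Vs -> x \in Hs u -> exists w, [/\ w \in Vs, w != u & x \in Hs w].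
Proof.
move=> uV /(inH _ uV) [cu [w [wV cw ne]]]; exists w; split => //.
apply/(inH _ wV); split => //; exists u; split => //; by rewrite eq_sym.
Qed.

Lemma F_Huniq u w w' x : u \in Vs -> w \in Vs -> w' \in Vs -> u != w -> u != w' ->
  x \in Hs u -> x \in Hs w -> x \in Hs w' -> w = w'.
Proof.
move=> uV wV w'V uw uw' /(inH _ uV) [cu0 _] /(inH _ wV) [cw0 _] /(inH _ w'V) [cw1 _].
exact (partner uV wV w'V uw uw' cu0 cw0 cu0 cw1).
Qed.

Lemma sysP p : p \in Sys -> (exists2 u, u \in Vs & p = (Ss u, Hs u)) \/
  (exists2 u, u \in Vs & p = (Hs u, set0) /\ Hs u != set0).
Proof.
case/setUP => /imsetP [u uin ->]; first by left; exists u.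
by right; move: uin; rewrite inE => /andP[uV ne]; exists u.
Qed.

Lemma sys1 u : u \in Vs -> (Ss u, Hs u) \in Sys.
Proof. by move=> uV; apply/setUP; left; apply/imsetP; exists u. Qed.

Lemma sys2 u : u \in Vs -> Hs u != set0 -> (Hs u, set0) \in Sys.
Proof. by move=> uV ne; apply/setUP; right; apply/imsetP; exists u; rewrite // inE uV ne. Qed.

Lemma polestar : polestar_system Sys.
Proof.
have SP : set_pair_system Sys.
  move=> p /sysP [[u uV ->]|[u uV [-> ne]]] /=; split => //; last by rewrite setI0.
    exact: F_Sne.
  apply/setP => x; rewrite inE in_set0; apply/negP => /andP[xs xh].
  exact (F_SH uV uV xs xh).
split => //.
- rewrite /partition; apply/and3P; split.
  + apply/eqP/setP => x; rewrite in_setT /cover; apply/bigcupP.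
    have [p0 [pp0 lp0]] := Hreach (phi x).
    have rl : r (last rho p0) <= i by rewrite lp0 rphi.
    have [w wV win] := root_meets pp0 rl.
    have [_ cw] := mem_path_connect pp0 win; rewrite lp0 in cw.
    case: (boolP [exists w', (w' \in Vs) && connect a w' (phi x) && (w' != w)]).
      case/existsP => w' /andP[/andP[w'V c'] ne].
      have xH : x \in Hs w by apply/(inH _ wV); split => //; exists w'.
      have ne0 : Hs w != set0 by apply/set0Pn; exists x.
      exists (Hs w); last by [].
      by apply/imsetP; exists (Hs w, set0); [exact: sys2|].
    move=> /existsPn h.
    have xS : x \in Ss w.
      apply/(inS _ wV); split => // w' w'V c'; apply/eqP.
      by have := h w'; rewrite w'V c' /= => /negbNE.
    exists (Ss w) => //; by apply/imsetP; exists (Ss w, Hs w); [exact: sys1|].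
  + apply/trivIsetP => B1 B2 /imsetP [p1 p1S ->] /imsetP [p2 p2S ->] ne.
    rewrite -setI_eq0; apply/eqP/setP => x; rewrite inE in_set0; apply/negP => /andP[x1 x2].
    move: ne x1 x2.
    case/sysP: p1S => [[u uV ->]|[u uV [-> _]]]; case/sysP: p2S => [[w wV ->]|[w wV [-> _]]] /=.
    * by move=> ne x1 x2; move: ne; rewrite (F_SS uV wV x1 x2) eqxx.
    * by move=> _ x1 x2; apply: F_SH uV wV x1 x2.
    * by move=> _ x1 x2; apply: F_SH wV uV x2 x1.
    * by move=> ne x1 x2; move: ne; rewrite (F_HH uV wV x1 x2) eqxx.
  + apply/negP => /imsetP [p pS e]; have [h _] := SP p pS.
    by rewrite -e eqxx in h.
- move=> p q pS qS ne; apply/negP => /eqP e; move: ne e.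
  case/sysP: pS => [[u uV ->]|[u uV [-> _]]]; case/sysP: qS => [[w wV ->]|[w wV [-> _]]] /=.
  + move=> ne e; have /set0Pn [x xS] := F_Sne uV.
    have xS' : x \in Ss w by rewrite -e.
    by move: ne; rewrite (F_SS uV wV xS xS') eqxx.
  + move=> _ e; have /set0Pn [x xS] := F_Sne uV.
    have xS' : x \in Hs w by rewrite -e.
    exact (F_SH uV wV xS xS').
  + move=> _ e; have /set0Pn [x xS] := F_Sne wV.
    have xS' : x \in Hs u by rewrite e.
    exact (F_SH wV uV xS xS').
  + by move=> ne e; move: ne; rewrite e eqxx.
- move=> p /sysP [[u uV ->]|[u uV [-> ne]]] /= hne; last by rewrite eqxx in hne.
  split; first exact: sys2 uV hne.
  have /set0Pn [x xH] := hne.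
  have [w [wV wu xw]] := F_Hpartner uV xH.
  have eH : Hs w = Hs u := F_HH wV uV xw xH.
  exists (Ss w, Hs w); split.
    split => //; first exact: sys1.
    apply/negP => /eqP [eS _]; have /set0Pn [y yS] := F_Sne wV.
    have yS' : y \in Ss u by rewrite -eS.
    by move: wu; rewrite (F_SS wV uV yS yS') eqxx.
  move=> q [qS qne qe]; case/sysP: qS qne qe => [[w' w'V ->]|[w' w'V [-> _]]] /= qne qe.
    have uw' : u != w'.
      by apply/negP => /eqP e; move: qne; rewrite e eqxx.
    have xw' : x \in Hs w' by rewrite qe.
    have uw : u != w by rewrite eq_sym.
    by rewrite (F_Huniq uV wV w'V uw uw' xH xw xw').
  by move: hne; rewrite -qe eqxx.
Qed.

End Main.

Theorem mainTheorem5 (V X : finType) (a : rel V) (rho : V) (phi : X -> V)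
    (r : V -> nat) :
  0 < #|X| ->
  is_X_cactus a rho phi ->
  is_ranking a phi r ->
  forall i : nat, i <= sigma r -> polestar_system (Sys_i a rho phi r i).
Proof.
move=> _ [[Hacyc [Hind0 Hreach]] _ Hcact Hphi] [Hr0 Hlt Heq _] i _.
exact: (polestar i Hacyc Hind0 Hreach Hcact Hphi Hlt Heq Hr0).
Qed.
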